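(* Let $m\geq 0$ and $n>1$. There is an injection from $P_3(-m+1,n)$ to $Q_3(m,n)$.
   Context: Partitions are identified with their $m$-Durfee rectangle symbols, defined as follows. - For a partition $\lambda$ of $n$ with $\ell(\lambda)>m$ parts, let $j\geq1$ be the largest integer with $\lambda_{m+j}\geq j$. Let $\alpha$ be the partition whose $i$-th part is the number of $k\leq m+j$ with $\lambda_k\geq j+i$ (the columns right of the $(m+j)\times j$ rectangle). Let $\beta=(\lambda_{m+j+1},\lambda_{m+j+2},\ldots)$ (the rows below the rectangle). - If $\ell(\lambda)\leq m$, set $j=0$, $\alpha=\lambda'$ (the conjugate) and $\beta=\emptyset$. The symbol is written $(\alpha,\beta)_{(m+j)\times j}$, with $\ell(\cdot)$ denoting number of parts. The first part of an empty sequence is taken to be $0$. $P(-m+1,n)$ is the set of partitions of $n$ with rank (largest part minus number of parts) at least $-m+1$. $P_3(-m+1,n)$ is the set of those $(\alpha,\beta)_{(m+j)\times j}\in P(-m+1,n)$ with $j\geq2$ and $\beta_1\leq j-2$. The rank-set of $\lambda=(\lambda_1,\ldots,\lambda_\ell)$ is $[-\lambda_1,1-\lambda_2,\ldots,\ell-1-\lambda_\ell,\ell,\ell+1,\ldots]$. $Q(m,n)$ is the set of partitions of $n$ whose rank-set contains $m$. $Q_3(m,n)$ is the set of $(\gamma,\delta)_{(m+j')\times j'}\in Q(m,n)$ with $j'\geq1$, $\ell(\delta)-\ell(\gamma)\geq 0$ and $\gamma_1=m+j'$. *)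

(* Defs.v *)
(* Partitions are represented as nonincreasing sequences
   of positive naturals; lambda_k (1-indexed) is nth 0 lambda (k-1). *)
From mathcomp Require Import all_boot all_order all_algebra.
Set Implicit Arguments. Unset Strict Implicit. Unset Printing Implicit Defensive.
Import Order.TTheory GRing.Theory Num.Theory.

Definition part (l : seq nat) (k : nat) : nat := nth 0 l k.-1.

Definition is_partition (n : nat) (l : seq nat) : bool :=
  [&& sorted geq l, all (fun x => 0 < x) l & sumn l == n].

Definition conjugate (l : seq nat) : seq nat :=
  [seq count (fun x => i <= x) l | i <- iota 1 (head 0 l)].

(* j of the m-Durfee rectangle: 0 if l(lambda) <= m, otherwise the largest
   j >= 1 with lambda_(m+j) >= j (any such j satisfies j <= l(lambda)). *)
Definition durfee (m : nat) (l : seq nat) : nat :=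
  if size l <= m then 0
  else foldr maxn 0 [seq j <- iota 1 (size l) | j <= part l (m + j)].

Definition dalpha (m : nat) (l : seq nat) : seq nat :=
  if size l <= m then conjugate l
  else let j := durfee m l in
    [seq c <- [seq count (fun x => j + i <= x) (take (m + j) l)
               | i <- iota 1 (head 0 l)] | 0 < c].

Definition dbeta (m : nat) (l : seq nat) : seq nat :=
  if size l <= m then [::] else drop (m + durfee m l) l.

(* P(-m+1, n): partitions of n with rank >= -m+1 *)
Definition inP (m n : nat) (l : seq nat) : bool :=
  is_partition n l &&
  ((1 - (m : int) <= (head 0 l : int) - (size l : int))%R).

Definition inP3 (m n : nat) (l : seq nat) : bool :=
  [&& inP m n l, 2 <= durfee m l & head 0 (dbeta m l) <= durfee m l - 2].

Definition in_rankset (r : int) (l : seq nat) : bool :=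
  has (fun i : nat => ((i : int) - (nth 0 l i : int) == r)%R) (iota 0 (size l))
  || ((size l : int) <= r)%R.

Definition inQ (m n : nat) (l : seq nat) : bool :=
  is_partition n l && in_rankset (m : int) l.

Definition inQ3 (m n : nat) (l : seq nat) : bool :=
  [&& inQ m n l, 1 <= durfee m l,
      ((size (dbeta m l) : int) - (size (dalpha m l) : int) >= 0)%R
    & head 0 (dalpha m l) == m + durfee m l].

(* Main.v *)
Require Import Defs.
From mathcomp Require Import all_boot all_order all_algebra.
From mathcomp Require Import zify.
Set Implicit Arguments. Unset Strict Implicit. Unset Printing Implicit Defensive.

Lemma geq_trans' : transitive geq.
Proof. by move=> y x z h1 h2; apply: leq_trans h2 h1. Qed.

Lemma nth_mono (l : seq nat) i k : sorted geq l -> i <= k -> nth 0 l k <= nth 0 l i.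
Proof.
move=> sl ik; case: (ltnP k (size l)) => hk.
  have hi : i < size l by apply: leq_ltn_trans hk.
  have := sorted_leq_nth geq_trans' (fun x => leqnn x) 0 sl; apply; by rewrite ?inE.
by rewrite nth_default.
Qed.

Lemma nth_pos_size (s : seq nat) i : 0 < nth 0 s i -> i < size s.
Proof. by case: (ltnP i (size s)) => // h; rewrite nth_default. Qed.

Lemma le_head (s : seq nat) x : sorted geq s -> x \in s -> x <= head 0 s.
Proof.
move=> ss /(nthP 0) [i hi <-]. rewrite -nth0. exact: nth_mono.
Qed.

Lemma sorted_cat_geq (s1 s2 : seq nat) : sorted geq s1 -> sorted geq s2 ->
  (forall x y, x \in s1 -> y \in s2 -> y <= x) -> sorted geq (s1 ++ s2).
Proof.
case: s1 => [|a s1] //= h1 h2 h. rewrite cat_path h1 /=.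
case: s2 h2 h => [|b s2] //= h2 h. rewrite h2 andbT. apply: h.
  by rewrite mem_last.
by rewrite mem_head.
Qed.

Lemma foldr_max_ub (s : seq nat) x : x \in s -> x <= foldr maxn 0 s.
Proof.
elim: s => //= a s IH; rewrite in_cons => /orP [/eqP->|/IH h].
  exact: leq_maxl.
exact: leq_trans h (leq_maxr _ _).
Qed.

Lemma foldr_max_lub (s : seq nat) J : (forall y, y \in s -> y <= J) -> foldr maxn 0 s <= J.
Proof.
elim: s => //= a s IH h; rewrite geq_max h ?mem_head //= IH // => y hy.
by apply: h; rewrite in_cons hy orbT.
Qed.

Lemma foldr_max_mem (s : seq nat) : 0 < foldr maxn 0 s -> foldr maxn 0 s \in s.
Proof.
elim: s => //= a s IH; case: (leqP a (foldr maxn 0 s)) => ha h.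
  by rewrite in_cons IH ?orbT.
by rewrite mem_head.
Qed.

Lemma durfee_eq m s J : sorted geq s -> 1 <= J -> J <= nth 0 s (m + J).-1 ->
  nth 0 s (m + J) < J.+1 -> durfee m s = J.
Proof.
move=> ss hJ h1 h2.
have hs : (m + J).-1 < size s by apply: nth_pos_size; apply: leq_trans h1.
rewrite /durfee ifF; last by apply/negbTE; rewrite -ltnNge; lia.
apply/eqP; rewrite eqn_leq; apply/andP; split.
  apply: foldr_max_lub => y; rewrite mem_filter mem_iota /part => /andP [hy _].
  case: (leqP y J) => // hyJ.
  have : nth 0 s (m + y).-1 <= nth 0 s (m + J) by apply: nth_mono => //; lia.
  lia.
apply: foldr_max_ub; rewrite mem_filter mem_iota /part h1 /=; lia.
Qed.

Lemma durfee_facts m l : sorted geq l -> 0 < durfee m l ->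
  [/\ m < size l, durfee m l <= nth 0 l (m + durfee m l).-1 & m + durfee m l <= size l].
Proof.
move=> sl; rewrite /durfee; case: ifP => hs //= h.
have := foldr_max_mem h; rewrite mem_filter mem_iota /part => /andP [hj _].
have := nth_pos_size (leq_trans h hj).
split => //; [lia | lia].
Qed.

Lemma size_dalpha_le m s : sorted geq s -> m < size s ->
  size (dalpha m s) <= head 0 s - durfee m s.
Proof.
move=> ss hs; rewrite /dalpha ifF; last by apply/negbTE; rewrite -ltnNge.
rewrite size_filter count_map -size_filter.
have -> : head 0 s - durfee m s = size (iota 1 (head 0 s - durfee m s)) by rewrite size_iota.
apply: uniq_leq_size; first by rewrite filter_uniq ?iota_uniq.
move=> x; rewrite mem_filter mem_iota /preim /= -has_count => /andP [/hasP [y hy hxy] hx].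
have := le_head ss (mem_take hy); rewrite mem_iota; lia.
Qed.

Lemma sumn_map_succ (s : seq nat) : sumn (map succn s) = sumn s + size s.
Proof. by elim: s => //= a s ->; lia. Qed.

Lemma filter_ones c : filter (fun x => 1 < x) (nseq c 1) = [::].
Proof. by elim: c. Qed.

Lemma sorted_nseq1 c : sorted geq (nseq c 1).
Proof. elim: c => // k IH; case: k IH => //= k IH. Qed.

Definition fmap (m : nat) (l : seq nat) : seq nat :=
  take (m + durfee m l).-1 (behead l) ++
  (durfee m l).-1 :: (map succn (drop (m + durfee m l) l) ++ nseq (head 0 l + m + 1 - size l) 1).

Definition ginv (m : nat) (u : seq nat) : seq nat :=
  (size u - m - 1) :: (take (m + durfee m u) u ++
  map predn (filter (fun x => 1 < x) (drop (m + durfee m u).+1 u))).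

Lemma key m n l : inP3 m n l -> inQ3 m n (fmap m l) /\ ginv m (fmap m l) = l.
Proof.
case/and3P => /andP [/and3P [sl pl /eqP sn] rk] hj hb.
have dpos : 0 < durfee m l by apply: leq_trans hj.
have [hsm hjK hKs] := durfee_facts (m:=m) sl dpos.
rewrite /dbeta ifN -?ltnNge // -nth0 nth_drop addn0 in hb.
rewrite /fmap /ginv.
move: hj hb hjK hKs; set j := durfee m l => hj hb hjK hKs.
have El : l = head 0 l :: behead l by case: (l) hsm.
move: rk; set h := head 0 l; set t := behead l => rk.
have rk' : size l < h + m by lia.
have st : size t = (size l).-1 by rewrite size_behead.
set A := take (m + j).-1 t.
set B := drop (m + j) l.
set c := h + m + 1 - size l.
have sizeA : size A = (m + j).-1 by rewrite size_takel // st; lia.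
have nthA : forall i, i < (m + j).-1 -> nth 0 A i = nth 0 l i.+1.
  by move=> i hi; rewrite nth_take // El.
have Bt : B = drop (m + j).-1 t.
  rewrite /B El; have -> : m + j = (m + j).-1.+1 by lia. by [].
have sizeB : size B = size l - (m + j) by rewrite size_drop.
have lA : forall x, x \in A -> j <= x <= h.
  move=> x /(nthP 0) [i hi <-]; rewrite nthA -?sizeA //.
  apply/andP; split.
    eapply leq_trans; first exact hjK.
    apply: nth_mono => //; rewrite -sizeA //.
  rewrite /h -nth0; exact: nth_mono.
have lB : forall x, x \in B -> 0 < x <= j - 2.
  move=> x hx; apply/andP; split.
    by move: pl => /allP; apply; apply: mem_drop hx.
  move: hx => /(nthP 0) [i hi <-]; rewrite nth_drop.
  apply: leq_trans hb; apply: nth_mono => //; lia.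
have sB : sorted geq B by apply: drop_sorted.
have sA : sorted geq A by apply: take_sorted; move: sl; rewrite El /=; apply: path_sorted.
set u := A ++ _.
have sizeu : size u = h + m + 1.
  rewrite /u size_cat /= size_cat size_map size_nseq sizeA sizeB /c; lia.
have nthu1 : forall i, i < (m + j).-1 -> nth 0 u i = nth 0 l i.+1.
  by move=> i hi; rewrite /u nth_cat sizeA hi nthA.
have nthu2 : nth 0 u (m + j).-1 = j.-1.
  by rewrite /u nth_cat sizeA ltnn subnn.
have sM : sorted geq (map succn B).
  by rewrite sorted_map; apply: sub_sorted sB => x y; rewrite /relpre /= ltnS.
have sR : sorted geq (map succn B ++ nseq c 1).
  apply: sorted_cat_geq => //; first exact: sorted_nseq1.
  by move=> x y /mapP [z _ ->] /nseqP [-> _].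
have sjR : sorted geq (j.-1 :: (map succn B ++ nseq c 1)).
  change (sorted geq ([:: j.-1] ++ (map succn B ++ nseq c 1))).
  apply: sorted_cat_geq => // x y; rewrite inE => /eqP -> .
  rewrite mem_cat => /orP [/mapP [z hz ->]|/nseqP [-> _]].
    by have := lB _ hz; lia.
  lia.
have su : sorted geq u.
  apply: sorted_cat_geq => // x y hx; rewrite inE => /orP [/eqP ->|].
    by have := lA _ hx; lia.
  rewrite mem_cat => /orP [/mapP [z hz ->]|/nseqP [-> _]].
    by have := lA _ hx; have := lB _ hz; lia.
  by have := lA _ hx; lia.
have du : durfee m u = j.-1.
  apply: durfee_eq => //; first lia.
    have -> : (m + j.-1).-1 = (m + j).-1.-1 by lia.
    rewrite nthu1; last lia.
    apply: leq_trans (leq_pred j) _.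
    eapply leq_trans; first exact hjK.
    apply: nth_mono => //; lia.
  have -> : m + j.-1 = (m + j).-1 by lia.
  by rewrite nthu2.
have headu : head 0 u = nth 0 l 1 by rewrite -nth0 nthu1 //; lia.
have h2 : j <= nth 0 l 1 <= h.
  apply/andP; split.
    eapply leq_trans; first exact hjK. apply: nth_mono => //; lia.
  rewrite /h -nth0; exact: nth_mono.
split.
  apply/and4P; split.
  - apply/andP; split.
      apply/and3P; split => //.
        rewrite /u all_cat /= all_cat; apply/and4P; split.
        + by apply/allP => x /lA; lia.
        + lia.
        + by apply/allP => x /mapP [y _ ->].
        + by apply/allP => x /nseqP [-> _].
      have e1 : sumn l = h + sumn t by rewrite {1}El.
      have e2 : sumn t = sumn A + sumn B by rewrite Bt -sumn_cat cat_take_drop.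
      rewrite /u sumn_cat /= sumn_cat sumn_map_succ sumn_nseq sizeB /c.
      apply/eqP; lia.
    rewrite /in_rankset; apply/orP; left; apply/hasP; exists (m + j).-1.
      rewrite mem_iota sizeu; lia.
    rewrite nthu2; apply/eqP; lia.
  - by rewrite du; lia.
  - have hmu : m < size u by rewrite sizeu; lia.
    rewrite /dbeta ifF; last by apply/negbTE; rewrite -ltnNge.
    rewrite size_drop sizeu du. have := size_dalpha_le su hmu; rewrite headu du.
    lia.
  - have hmu : m < size u by rewrite sizeu; lia.
    have tA : take (m + j.-1) u = A by rewrite /u take_size_cat //; lia.
    have cA : count (fun x => j.-1 + 1 <= x) A = size A.
      by apply/eqP; rewrite -all_count; apply/allP => x /lA; lia.
    rewrite /dalpha ifF; last by apply/negbTE; rewrite -ltnNge.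
    rewrite headu; case E: (nth 0 l 1) h2 => [|k] h2'; first lia.
    have -> : iota 1 k.+1 = 1 :: iota 2 k by [].
    rewrite du tA map_cons cA sizeA.
    have hp : 0 < (m + j).-1 by lia.
    rewrite [filter _ _]/= hp /=.
    apply/eqP; lia.
have tA : take (m + j.-1) u = A by rewrite /u take_size_cat //; lia.
have dR : drop (m + j.-1).+1 u = map succn B ++ nseq c 1.
  by rewrite /u -cat_rcons drop_size_cat // size_rcons sizeA; lia.
have fB : filter (fun x => 1 < x) (map succn B) = map succn B.
  by apply/all_filterP/allP => x /mapP [y hy ->]; have := lB _ hy; lia.
rewrite du sizeu tA dR filter_cat filter_ones cats0 fB (mapK succnK).
rewrite [RHS]El; congr (_ :: _); first lia.
by rewrite Bt cat_take_drop.
Qed.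

Theorem lemma2p6 (m n : nat) : 1 < n ->
  exists f : seq nat -> seq nat,
    (forall l, inP3 m n l -> inQ3 m n (f l)) /\
    (forall l1 l2, inP3 m n l1 -> inP3 m n l2 -> f l1 = f l2 -> l1 = l2).
Proof.
move=> _; exists (fmap m); split.
  by move=> l /key [].
move=> l1 l2 h1 h2 e.
have [_ g1] := key h1; have [_ g2] := key h2.
by rewrite -g1 e g2.
Qed.
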